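(* Fix $b>0$, $c>0$ and $0<\theta<c$, and let the parameter $a\in\mathbb R$ vary. Consider the two-player complete-information contest with efforts $x,y\ge 0$, payoffs $P(x,y)-\theta x$ and $1-P(x,y)-\theta y$, where $P(x,y)=\tfrac12+(x-y)\bigl(c-b(x+y)+axy\bigr)$ (no truncation). Define the pure-equilibrium region $\{a: b^2\ge a(c-\theta)\}$ (equivalently $a=0$ or $\zeta(a):=\frac{b^2-a(c-\theta)}{a^2}\ge 0$) and the mixed-equilibrium region $\{a: b^2<a(c-\theta)\}$ (equivalently $\zeta(a)<0$). Define equilibrium effort $e(a)$ by: $e(a)=\frac{b-\sqrt{b^2-a(c-\theta)}}{a}$ for $a\neq0$ in the pure region, $e(0)=\frac{c-\theta}{2b}$, and $e(a)=b/a$ on the mixed region (the common mean effort of every mixed equilibrium there). Then $e$ is increasing on the pure-equilibrium region and decreasing on the mixed-equilibrium region. Hence equilibrium effort is maximized at the boundary $\zeta=0$, i.e. at $a$ with $b^2=a(c-\theta)$.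
   Context: On the pure region the unique equilibrium of this contest is the symmetric pure profile with effort $e(a)$ (for $a=0$ each player has the dominant strategy $(c-\theta)/(2b)$); on the mixed region every mixed equilibrium has both players' mean effort equal to $b/a$. *)

(* Defs.v *)
From HB Require Import structures.
From mathcomp Require Import all_boot all_order all_algebra.
From mathcomp Require Import reals.
Set Implicit Arguments. Unset Strict Implicit. Unset Printing Implicit Defensive.
Import Order.TTheory GRing.Theory Num.Theory.
Local Open Scope ring_scope.

(* Win probability of player 1 (untruncated): P(x,y) = 1/2 + (x-y)(c - b(x+y) + a x y).
   Recorded for documentation; the theorem concerns the effort function below. *)
Definition contestP (R : realType) (a b c x y : R) : R :=
  2^-1 + (x - y) * (c - b * (x + y) + a * x * y).

Definition zeta (R : realType) (b c theta a : R) : R :=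
  (b ^+ 2 - a * (c - theta)) / a ^+ 2.

Definition pure_region (R : realType) (b c theta a : R) : Prop :=
  a * (c - theta) <= b ^+ 2.

Definition mixed_region (R : realType) (b c theta a : R) : Prop :=
  b ^+ 2 < a * (c - theta).

Definition eff (R : realType) (b c theta a : R) : R :=
  if a == 0 then (c - theta) / (2 * b)
  else if a * (c - theta) <= b ^+ 2
       then (b - Num.sqrt (b ^+ 2 - a * (c - theta))) / a
       else b / a.

(* Main.v *)
Require Import Defs.
From HB Require Import structures.
From mathcomp Require Import all_boot all_order all_algebra.
From mathcomp Require Import reals.
From mathcomp Require Import ring lra.
Import Order.TTheory GRing.Theory Num.Theory.
Local Open Scope ring_scope.

Lemma eff_pure (R : realType) (b c theta a : R) :
  0 < b -> 0 < c - theta -> a * (c - theta) <= b ^+ 2 ->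
  eff b c theta a = (c - theta) / (b + Num.sqrt (b ^+ 2 - a * (c - theta))).
Proof.
move=> hb hk ha; have ha' : 0 <= b ^+ 2 - a * (c - theta) by rewrite subr_ge0.
rewrite /eff ha.
have [->|a0] := eqVneq a 0.
  rewrite mul0r subr0 sqrtr_sqr ger0_norm; last exact: ltW.
  by rewrite -mulr2n mulr_natl.

have s0 := sqrtr_ge0 (b ^+ 2 - a * (c - theta)).
have hs := sqr_sqrtr ha'.
move: s0 hs; set s := Num.sqrt _ => s0 hs.
have bs : b + s != 0 by rewrite gt_eqF //; lra.
apply/eqP; rewrite eqr_div //.
apply/eqP.
have : (b - s) * (b + s) = b ^+ 2 - s ^+ 2 by rewrite -subr_sqr.
rewrite hs => ->; ring.
Qed.

Theorem theorem2 (R : realType) (b c theta : R) :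
  0 < b -> 0 < c -> 0 < theta -> theta < c ->
  (* e is (strictly) increasing on the pure-equilibrium region *)
  (forall a1 a2 : R, pure_region b c theta a1 -> pure_region b c theta a2 ->
     a1 < a2 -> eff b c theta a1 < eff b c theta a2) /\
  (* e is (strictly) decreasing on the mixed-equilibrium region *)
  (forall a1 a2 : R, mixed_region b c theta a1 -> mixed_region b c theta a2 ->
     a1 < a2 -> eff b c theta a2 < eff b c theta a1) /\
  (* hence e is maximized at the boundary a* with b^2 = a* (c - theta) *)
  (forall a : R, eff b c theta a <= eff b c theta (b ^+ 2 / (c - theta))).
Proof.
move=> hb hc ht htc; have hk : 0 < c - theta by rewrite subr_gt0.
set k := c - theta in hk *.
have sq0 : forall x : R, 0 <= Num.sqrt x := fun x => sqrtr_ge0 x.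
split.
  rewrite /pure_region => a1 a2 h1 h2 lt12; rewrite !eff_pure // -/k.
  have hs : Num.sqrt (b ^+ 2 - a2 * k) < Num.sqrt (b ^+ 2 - a1 * k).
    rewrite ltr_sqrt; first by rewrite ltrD2l ltrN2 ltr_pM2r.
    rewrite subr_gt0; apply: (lt_le_trans _ h2); by rewrite ltr_pM2r.
  have p1 := sq0 (b ^+ 2 - a1 * k); have p2 := sq0 (b ^+ 2 - a2 * k).
  rewrite ltr_pdivrMr; last lra.
  rewrite mulrAC ltr_pdivlMr; last lra.
  nra.
have kpos : 0 < b ^+ 2 / k by rewrite divr_gt0 // exprn_gt0.
have mixE : forall a, mixed_region b c theta a -> 0 < a /\ eff b c theta a = b / a.
  move=> a; rewrite /mixed_region /eff -/k => h.
  have a0 : 0 < a.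
    rewrite -(pmulr_lgt0 _ hk); apply: lt_trans h; exact: exprn_gt0.
  by rewrite (gt_eqF a0) leNgt h.
split.
  move=> a1 a2 h1 h2 lt12; have [p1 ->] := mixE _ h1; have [p2 ->] := mixE _ h2.
  rewrite ltr_pdivrMr // mulrAC ltr_pdivlMr //; nra.
have estar : eff b c theta (b ^+ 2 / k) = k / b.
  rewrite eff_pure // ?divfK ?gt_eqF // subrr sqrtr0 addr0 //.
move=> a; rewrite estar.
have [h|h] := leP (a * k) (b ^+ 2).
  rewrite eff_pure // -/k; have := sq0 (b ^+ 2 - a * k) => p.
  rewrite ler_pdivrMr; last lra.
  rewrite mulrAC ler_pdivlMr //; nra.
have [p ->] := mixE a h.
rewrite ler_pdivrMr // mulrAC ler_pdivlMr //; nra.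
Qed.
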